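(* Fix $x,y\in Y_{G,b,P_\delta}$, $(u_x,v_x)\in[Q_x]$, $(u_y,v_y)\in[Q_y]$ and $w\in\Delta P$ (identified with an element of $P$), and write $$s^{-1}(u_xxv_x^{-1})\,s^{-1}(wu_yyv_y^{-1}w^{-1})=\sum_{\substack{z\in Z\\(u'_z,v'_z)\in A_z}}\alpha_z\,s^{-1}(u'_zz(v'_z)^{-1})$$ with $Z\subseteq Y_{G,b,P_\delta}$, $A_z\subseteq P\times P$, $\alpha_z\in k$. Let $W'=Q_{u_x,v_x}\cap Q_{wu_y,wv_y,y}$. Then for all $[f],[g]\in\mathrm{H}^*(W',k)$, $$\theta^*_{u_x,v_x,x}([f])\cup\theta^*_{wu_y,wv_y,y}([g])=\sum_{\substack{z\in Z\\(u'_z,v'_z)\in A_z}}\alpha_z\,\theta^*_{u'_z,v'_z,z}([f]\cup[g]).$$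
   Context: $G$ is a finite group, $k$ an algebraically closed field of characteristic $p$, $b$ a block idempotent of $kG$ with defect pointed group $P_\delta$, $i\in\delta$ a source idempotent; the source algebra $ikGi$ is a $k[P\times P]$-module via $(u,v)\cdot m=umv^{-1}$ and a $k\Delta P$-module by restriction to $\Delta P=\{(w,w)\mid w\in P\}$; cohomology with coefficients in $ikGi$ carries the cup product with respect to the multiplication of $ikGi$. Conjugation: ${}^xa=xax^{-1}$, $a^x=x^{-1}ax$. $Y_{G,b,P_\delta}$ is a subset of a system of representatives of $P\backslash G/P$ with a fixed isomorphism of $k[P\times P]$-modules $s:ikGi\to\bigoplus_{x\in Y_{G,b,P_\delta}}k[PxP]$. $Q_x:=\{(a,a^x)\mid a\in P\cap{}^xP\}$, $Q_{u,v,x}:=\Delta P\cap{}^{(u,v)}Q_x$; $[Q_x]$ is a fixed system of representatives of $\Delta P\backslash(P\times P)/Q_x$ and $Q_{u_x,v_x}:=Q_{u_x,v_x,x}$. $\theta_{u,v,x}:k\to ikGi$, $\alpha\mapsto\alpha s^{-1}(uxv^{-1})$, is a $kW$-module map for subgroups $W$ fixing $s^{-1}(uxv^{-1})$ (in particular for $W\le Q_{u,v,x}$), and $\theta^*_{u,v,x}:\mathrm{H}^*(W,k)\to\mathrm{H}^*(W,ikGi)$ is the induced map. *)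

(* Defs.v *)
From HB Require Import structures.
From mathcomp Require Import all_boot all_order all_algebra all_fingroup.
Set Implicit Arguments. Unset Strict Implicit. Unset Printing Implicit Defensive.
Import GRing.Theory.
Local Open Scope ring_scope.

(* The finite group G is modelled as the whole carrier of gT : finGroupType.
   The group algebra kG is modelled as {ffun gT -> k}: a = sum_g a(g) g.    *)
Notation galg gT k := {ffun gT -> k} (only parsing).

Section GroupAlgebra.
Variables (gT : finGroupType) (k : fieldType).

Local Notation galg := {ffun gT -> k} (only parsing).

Definition gmul (a b : galg) : galg :=
  [ffun z => \sum_(x : gT) a x * b (x^-1 * z)%g].

Definition gscale (c : k) (a : galg) : galg := [ffun z => c * a z].

Definition gel (g : gT) : galg := [ffun z => (z == g)%:R].

Definition gconj (g : gT) (a : galg) : galg := gmul (gmul (gel g) a) (gel (g^-1)%g).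

Definition idem (a : galg) := gmul a a = a.
Definition central (a : galg) := forall c, gmul a c = gmul c a.

Definition block_idem (b : galg) :=
  [/\ b != 0, idem b, central b &
      forall e, idem e -> central e -> gmul b e = e -> e = 0 \/ e = b].

Definition fixedby (H : {set gT}) (a : galg) := forall h, h \in H -> gconj h a = a.

Definition in_transfer (H : {group gT}) (a : galg) :=
  exists c, fixedby H c /\
    a = \sum_(X in lcosets H [set: gT]) gconj (repr X) c.

Definition defect_group (b : galg) (P : {group gT}) :=
  in_transfer P b /\ forall Q : {group gT}, Q \proper P -> ~ in_transfer Q b.

Definition prim_idem_fixed (P : {set gT}) (i : galg) :=
  [/\ fixedby P i, i != 0, idem i &
      forall e, fixedby P e -> idem e -> gmul i e = e -> gmul e i = e ->
                e = 0 \/ e = i].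

Definition brauer (P : {set gT}) (a : galg) : galg :=
  [ffun g => if g \in ('C(P))%g then a g else 0].

(* i is a source idempotent of b: P is a defect group, i is a primitive
   idempotent of (kGb)^P whose point delta satisfies Br_P(delta) <> 0,
   i.e. P_delta is a defect pointed group of G_{b} and i \in delta. *)
Definition source_idem (b : galg) (P : {group gT}) (i : galg) :=
  [/\ defect_group b P, prim_idem_fixed P i, gmul i b = i & brauer P i != 0].

Definition srcalg (i : galg) : pred galg := [pred a : galg | gmul (gmul i a) i == a].

Definition dcspan (P Y : {set gT}) : pred galg :=
  [pred a : galg | [forall g, (a g != 0) ==> [exists x in Y, g \in (P :* x * P)%g]]].

Definition dc_distinct (P Y : {set gT}) :=
  {in Y &, forall x y, y \in (P :* x * P)%g -> x = y}.

Definition source_iso (P Y : {set gT}) (i : galg) (s sinv : galg -> galg) :=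
  [/\ forall (c : k) (a a' : galg), s (gscale c a + a') = gscale c (s a) + s a',
      {in srcalg i, forall a, s a \in dcspan P Y},
      {in dcspan P Y, forall a, sinv a \in srcalg i},
      {in srcalg i, cancel s sinv} /\ {in dcspan P Y, cancel sinv s} &
      forall u v a, u \in P -> v \in P -> a \in srcalg i ->
        s (gmul (gmul (gel u) a) (gel (v^-1)%g)) = gmul (gmul (gel u) (s a)) (gel (v^-1)%g)].

(* the relation (a,b) ~ r in  Delta P \ (P x P) / Q_x,
   Q_x = {(c, c^x) | c in P cap xPx^-1}  (c^x = x^-1 c x, MathComp's c ^ x) *)
Definition dcrel (P : {set gT}) (x : gT) (ab r : gT * gT) :=
  exists2 w, w \in P & exists2 c, c \in (P :&: (P :^ x^-1))%g &
    ab = ((w * r.1 * c)%g, (w * r.2 * (c ^ x))%g).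

Definition dc_reps (P : {set gT}) (x : gT) (R : {set gT * gT}) :=
  R \subset setX P P /\
  forall a b, a \in P -> b \in P ->
    exists! r, r \in R /\ dcrel P x (a, b) r.

(* Q_{u,v,x} = Delta P cap ^{(u,v)} Q_x, identified with a subgroup of P *)
Definition Quvx (P : {set gT}) (u v x : gT) : {set gT} :=
  [set w in P | [exists c in (P :&: (P :^ x^-1))%g,
     (w == u * c * u^-1)%g && (w == v * (c ^ x) * v^-1)%g]].

Section Cohomology.
Variables (M : zmodType) (act : gT -> M -> M).

(* an n-cochain is a function on sequences of length n of elements of W *)
Definition sgnz (b : bool) (m : M) := if b then - m else m.

Definition merge_at (i : nat) (s : seq gT) : seq gT :=
  take i s ++ (nth 1%g s i * nth 1%g s i.+1)%g :: drop i.+2 s.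

Definition cobound (n : nat) (f : seq gT -> M) : seq gT -> M :=
  fun s => act (nth 1%g s 0) (f (behead s))
           + \sum_(j < n) sgnz (odd j.+1) (f (merge_at j s))
           + sgnz (odd n.+1) (f (take n s)).

Definition inW (W : {set gT}) (n : nat) (s : seq gT) :=
  size s = n /\ all (fun g => g \in W) s.

Definition cocycle (W : {set gT}) (n : nat) (f : seq gT -> M) :=
  forall s, inW W n.+1 s -> cobound n f s = 0.

Definition cohomologous (Msub : pred M) (W : {set gT}) (n : nat)
    (f g : seq gT -> M) :=
  match n with
  | 0 => forall s, inW W 0 s -> f s = g s
  | n'.+1 => exists2 h : seq gT -> M, (forall s, h s \in Msub) &
               forall s, inW W n s -> f s - g s = cobound n' h s
  end.
End Cohomology.

Definition triv_act (g : gT) (a : k) := a.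
Definition conj_act (g : gT) (a : galg) := gconj g a.

Definition cupk (m : nat) (f g : seq gT -> k) : seq gT -> k :=
  fun s => f (take m s) * g (drop m s).
Definition cupA (m : nat) (f g : seq gT -> galg) : seq gT -> galg :=
  fun s => gmul (f (take m s)) (gconj (\prod_(h <- take m s) h)%g (g (drop m s))).

Definition theta_star (sinv : galg -> galg) (u v x : gT) (f : seq gT -> k)
    : seq gT -> galg :=
  fun s => gscale (f s) (sinv (gel (u * x * v^-1)%g)).

End GroupAlgebra.

Arguments gel {gT k} g.

(* Main.v *)
Require Import Defs.
From HB Require Import structures.
From mathcomp Require Import all_boot all_order all_algebra all_fingroup.
Import GRing.Theory.
Local Open Scope ring_scope.
Section H.
Variables (gT : finGroupType) (k : fieldType).
Implicit Types (a c : {ffun gT -> k}).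

Lemma gmul_gel_l (g : gT) a : gmul (gel g) a = [ffun z => a (g^-1 * z)%g].
Proof.
apply/ffunP=> z; rewrite !ffunE (bigD1 g) //= big1 ?addr0 ?ffunE ?eqxx ?mul1r //.
by move=> h /negbTE hg; rewrite ffunE hg mul0r.
Qed.

Lemma gmul_gel_r (g : gT) a : gmul a (gel g) = [ffun z => a (z * g^-1)%g].
Proof.
apply/ffunP=> z; rewrite !ffunE (bigD1 (z * g^-1)%g) //= big1 ?addr0 ?ffunE.
  by rewrite invMg invgK mulgKV eqxx mulr1.
move=> h hne; rewrite ffunE; case: eqP => [E|]; last by rewrite mulr0.
by case/eqP: hne; rewrite -E invMg invgK mulgA mulgV mul1g.
Qed.

Lemma gconjE (g : gT) a : gconj g a = [ffun z => a (g^-1 * z * g)%g].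
Proof.
rewrite /gconj gmul_gel_r gmul_gel_l; apply/ffunP=> z; rewrite !ffunE.
by rewrite invgK mulgA.
Qed.

Lemma gconj_mul (h : gT) a c : gconj h (gmul a c) = gmul (gconj h a) (gconj h c).
Proof.
apply/ffunP=> z; rewrite !gconjE !ffunE.
rewrite (reindex_inj (conjg_inj h)) /=; apply: eq_bigr => x _.
rewrite !ffunE /conjg; congr (a _ * c _); first by rewrite mulgA.
by rewrite !invMg !invgK !mulgA mulgK.
Qed.

Lemma gconjM (h1 h2 : gT) a : gconj (h1 * h2) a = gconj h1 (gconj h2 a).
Proof. by apply/ffunP=> z; rewrite !gconjE !ffunE invMg !mulgA. Qed.

Lemma gconj1 a : gconj 1 a = a.
Proof. by apply/ffunP=> z; rewrite !gconjE !ffunE invg1 mul1g mulg1. Qed.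

Lemma gconj_gel (h e : gT) : gconj h (gel e : {ffun gT -> k}) = gel (h * e * h^-1)%g.
Proof.
apply/ffunP=> z; rewrite !gconjE !ffunE; congr ((_ : bool)%:R).
apply/eqP/eqP=> [<-|->]; first by rewrite !mulgA mulgV mul1g mulgK.
by rewrite !mulgA mulVg mul1g mulgKV.
Qed.

Lemma gconj_scale (h : gT) (c : k) a : gconj h (gscale c a) = gscale c (gconj h a).
Proof. by apply/ffunP=> z; rewrite !gconjE !ffunE. Qed.

Lemma gconj0 (h : gT) : gconj h (0 : {ffun gT -> k}) = 0.
Proof. by apply/ffunP=> z; rewrite !gconjE !ffunE. Qed.

Lemma gmul_scale (c d : k) a a' : gmul (gscale c a) (gscale d a') = gscale (c * d) (gmul a a').
Proof.
apply/ffunP=> z; rewrite !ffunE mulr_sumr; apply: eq_bigr=> x _.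
by rewrite !ffunE mulrACA.
Qed.


Lemma fix_sinv (P : {group gT}) Y (i b : {ffun gT -> k}) s sinv
   (hi : source_idem b P i) (hs : source_iso P Y i s sinv) (e h : gT) :
  (gel e : {ffun gT -> k}) \in dcspan P Y -> h \in P -> (h * e * h^-1 = e)%g ->
  gconj h (sinv (gel e)) = sinv (gel e).
Proof.
move=> He hP Hhe.
case: hs => _ _ hsv [cs cv] heq.
set a := sinv (gel e).
have aS : a \in srcalg i := hsv _ He.
have iP : gconj h i = i by case: hi => _ [fx _ _ _] _ _; apply: fx.
have cS : gconj h a \in srcalg i.
  have E : gconj h (gmul (gmul i a) i) = gconj h a by move/eqP: aS => ->.
  by rewrite !gconj_mul iP in E; rewrite inE /= E.
have := heq h h a hP hP aS.
rewrite -/(gconj h a) -/(gconj h (s a)) (cv _ He) gconj_gel Hhe -(cv _ He) => E.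
by rewrite -(cs _ cS) E cs.
Qed.

Lemma gconj_prod (W : {set gT}) (Yv : {ffun gT -> k}) (t : seq gT) :
  (forall h, h \in W -> gconj h Yv = Yv) -> all (fun g => g \in W) t ->
  gconj (\prod_(h <- t) h)%g Yv = Yv.
Proof.
move=> HW; elim: t => [|h t IH] /=; first by rewrite big_nil gconj1.
by case/andP=> hW tW; rewrite big_cons gconjM IH // HW.
Qed.

End H.
Lemma grp_id (gT : finGroupType) (U V c y : gT):
 ((U*c*U^-1) * (U*y*V^-1) * (V*(c^y)*V^-1)^-1 = U*y*V^-1)%g.
Proof. by rewrite conjgE !invMg !invgK !mulgA !mulgKV !mulgK. Qed.

Theorem lemma4p8 (gT : finGroupType) (k : closedFieldType) (p : nat)
    (hp : p \in [pchar k])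
    (b : galg gT k) (P : {group gT}) (i : galg gT k)
    (hb : block_idem b) (hi : source_idem b P i)
    (Y : {set gT}) (hY : dc_distinct P Y)
    (s sinv : galg gT k -> galg gT k) (hs : source_iso P Y i s sinv)
    (R : gT -> {set gT * gT}) (hR : forall x, x \in Y -> dc_reps P x (R x))
    (x y : gT) (hx : x \in Y) (hy : y \in Y)
    (ux vx uy vy : gT) (huvx : (ux, vx) \in R x) (huvy : (uy, vy) \in R y)
    (w : gT) (hw : w \in P)
    (Z : {set gT}) (A : gT -> {set gT * gT}) (alpha : gT -> gT * gT -> k)
    (hZ : Z \subset Y) (hA : forall z, z \in Z -> A z \subset setX P P)
    (hdec : gmul (sinv (gel (ux * x * vx^-1)%g))
                 (sinv (gel (w * uy * y * vy^-1 * w^-1)%g))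
            = \sum_(z in Z) \sum_(r in A z)
                 gscale (alpha z r) (sinv (gel (r.1 * z * r.2^-1)%g))) :
  let W' := Quvx P ux vx x :&: Quvx P (w * uy)%g (w * vy)%g y in
  forall (m n : nat) (f g : seq gT -> k),
    cocycle (@triv_act gT k) W' m f -> cocycle (@triv_act gT k) W' n g ->
    cohomologous (@conj_act gT k) (srcalg i) W' (m + n)
      (cupA m (theta_star sinv ux vx x f)
              (theta_star sinv (w * uy)%g (w * vy)%g y g))
      (fun t => \sum_(z in Z) \sum_(r in A z)
                 gscale (alpha z r) (theta_star sinv r.1 r.2 z (cupk m f g) t)).
Proof.
move=> W' m n f g _ _.
set e2 := (w * uy * y * vy^-1 * w^-1)%g in hdec *.
have EQ2 : ((w * uy) * y * (w * vy)^-1 = e2)%g by rewrite invMg !mulgA.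
have [uyP vyP] : uy \in P /\ vy \in P.
  case: (hR y hy) => /subsetP sub _.
  by move: (sub _ huvy); rewrite in_setX => /andP[].
have He2 : (gel e2 : {ffun gT -> k}) \in dcspan P Y.
  rewrite inE; apply/forallP => g0; apply/implyP; rewrite ffunE.
  case: (g0 =P e2) => [->|] /=; last by rewrite eqxx.
  move=> _; apply/existsP; exists y; rewrite hy /= -EQ2.
  apply: mem_mulg; last by rewrite groupV groupM.
  by rewrite mem_rcoset mulgK groupM.
have Hfix : forall h, h \in W' -> gconj h (sinv (gel e2)) = sinv (gel e2).
  move=> h; rewrite inE => /andP[_].
  rewrite inE => /andP[hP /existsP[c /andP[_ /andP[/eqP h1 /eqP h2]]]].
  apply: (@fix_sinv _ _ P Y i b s sinv hi hs _ _ He2 hP).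
  by rewrite -EQ2 {1}h1 h2 grp_id.
have key : forall t, all (fun g => g \in W') t ->
   cupA m (theta_star sinv ux vx x f) (theta_star sinv (w * uy)%g (w * vy)%g y g) t
   = \sum_(z in Z) \sum_(r in A z)
                 gscale (alpha z r) (theta_star sinv r.1 r.2 z (cupk m f g) t).
  move=> t tW.
  rewrite /cupA /theta_star EQ2 gconj_scale (@gconj_prod _ _ W') //; last first.
    by apply/allP => h /mem_take; move/allP: tW; apply.
  rewrite gmul_scale hdec; apply/ffunP => z0.
  rewrite ffunE !sum_ffunE mulr_sumr; apply: eq_bigr => z _.
  rewrite !sum_ffunE mulr_sumr; apply: eq_bigr => r _.
  by rewrite !ffunE /cupk mulrCA.
have [N <-] : exists N, N = (m + n)%N by exists (m + n)%N.
case: N => [|N].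
  by move=> t [_ tW]; apply: key.
exists (fun _ => 0).
  move=> _; rewrite inE /=; apply/eqP; apply/ffunP => z; rewrite !ffunE big1 // => x0 _.
  by rewrite ffunE big1 ?mul0r // => y0 _; rewrite ffunE mulr0.
move=> t [_ tW]; rewrite key // subrr /cobound /conj_act gconj0 big1 ?add0r.
  by case: (odd N.+1) => /=; rewrite ?oppr0.
by move=> j _; case: (odd j.+1) => /=; rewrite ?oppr0.
Qed.
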